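(* Let \(\mathcal G\) be an étale topological groupoid, and let \(\mathcal G\) act on its arrow space \(\mathcal G^{(1)}\) from the right by translations. The inverse semigroup of (right) equivariant partial homeomorphisms of \(\mathcal G^{(1)}\) is isomorphic to \(\mathrm{Bis}(\mathcal G)\).
   Context: A bisection of a topological groupoid is an open subset of \(\mathcal G^{(1)}\) on which range and source maps are injective and open. \(\mathcal G\) is étale if bisections cover \(\mathcal G^{(1)}\). \(\mathrm{Bis}(\mathcal G)\) is the inverse semigroup of bisections with \(st=\{gh:g\in s,h\in t\}\) and \(s^*=\{g^{-1}:g\in s\}\). The right translation action of \(\mathcal G\) on \(\mathcal G^{(1)}\) has anchor \(\mathrm s\) and \(h\cdot g=hg\) for \(\mathrm s(h)=\mathrm r(g)\). A partial homeomorphism \(t\colon U\to V\) (a homeomorphism between open subsets) of a right \(\mathcal G\)-space \(X\) is equivariant if \(U\) is \(\mathcal G\)-invariant and \(t(x\cdot g)=t(x)\cdot g\) whenever \(x\in U\) and \(x\cdot g\) is defined. Equivariant partial homeomorphisms form an inverse semigroup under composition and inversion. *)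

(* Defs.v *)
From HB Require Import structures.
From mathcomp Require Import all_boot.
From mathcomp Require Import classical_sets boolp topology.
Set Implicit Arguments. Unset Strict Implicit. Unset Printing Implicit Defensive.
Local Open Scope classical_set_scope.

(* A topological groupoid.  Multiplication is a total function [mul] whose
   value is only meaningful on composable pairs (src g = rng h), i.e.
   [mul g h] is the product gh, defined iff s(g) = r(h). *)
Record topGroupoid := TopGroupoid {
  Ob : topologicalType;
  Arr : topologicalType;
  src : Arr -> Ob;
  rng : Arr -> Ob;
  unt : Ob -> Arr;
  mul : Arr -> Arr -> Arr;
  inv : Arr -> Arr;
  src_mul : forall g h, src g = rng h -> src (mul g h) = src h;
  rng_mul : forall g h, src g = rng h -> rng (mul g h) = rng g;
  mulA : forall g h k, src g = rng h -> src h = rng k ->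
           mul g (mul h k) = mul (mul g h) k;
  src_unt : forall x, src (unt x) = x;
  rng_unt : forall x, rng (unt x) = x;
  mul_unt_l : forall g, mul (unt (rng g)) g = g;
  mul_unt_r : forall g, mul g (unt (src g)) = g;
  src_inv : forall g, src (inv g) = rng g;
  rng_inv : forall g, rng (inv g) = src g;
  mul_inv_l : forall g, mul (inv g) g = unt (src g);
  mul_inv_r : forall g, mul g (inv g) = unt (rng g);
  src_cont : continuous src;
  rng_cont : continuous rng;
  unt_cont : continuous unt;
  inv_cont : continuous inv;
  mul_cont : {within [set p : Arr * Arr | src p.1 = rng p.2],
                continuous (fun p => mul p.1 p.2)}
}.

Section Defs.
Variable G : topGroupoid.
Local Notation A := (Arr G).

Definition is_bisection (U : set A) : Prop :=
  open U /\
  {in U &, injective (@rng G)} /\ {in U &, injective (@src G)} /\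
  (forall W : set A, open W -> W `<=` U -> open ((@rng G) @` W)) /\
  (forall W : set A, open W -> W `<=` U -> open ((@src G) @` W)).

Definition etale : Prop :=
  forall g : A, exists U, is_bisection U /\ U g.

Definition bis_mul (U V : set A) : set A :=
  [set x | exists g h, U g /\ V h /\ src g = rng h /\ x = mul g h].
Definition bis_inv (U : set A) : set A := [set x | exists g, U g /\ x = inv g].

(* partial maps on A, represented by their graphs *)
Definition graph_of (U : set A) (t : A -> A) : set (A * A) :=
  [set p | U p.1 /\ p.2 = t p.1].

Definition is_partial_homeo (P : set (A * A)) : Prop :=
  exists (U V : set A) (t t' : A -> A),
    open U /\ open V /\ P = graph_of U t /\
    {within U, continuous t} /\ {within V, continuous t'} /\
    (forall x, U x -> V (t x) /\ t' (t x) = x) /\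
    (forall y, V y -> U (t' y) /\ t (t' y) = y).

Definition is_equivariant_phomeo (P : set (A * A)) : Prop :=
  exists (U V : set A) (t t' : A -> A),
    open U /\ open V /\ P = graph_of U t /\
    {within U, continuous t} /\ {within V, continuous t'} /\
    (forall x, U x -> V (t x) /\ t' (t x) = x) /\
    (forall y, V y -> U (t' y) /\ t (t' y) = y) /\
    (forall x g, U x -> src x = rng g ->
       U (mul x g) /\ src (t x) = rng g /\ t (mul x g) = mul (t x) g).

Definition ph_comp (P Q : set (A * A)) : set (A * A) :=
  [set p | exists y, Q (p.1, y) /\ P (y, p.2)].
Definition ph_inv (P : set (A * A)) : set (A * A) := [set p | P (p.2, p.1)].

End Defs.

(* Main.v *)
Require Import Defs.
From mathcomp Require Import all_boot.
From mathcomp Require Import classical_sets boolp topology.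
Local Open Scope classical_set_scope.

Lemma open_pt (T : topologicalType) (S : set T) :
  (forall x, S x -> exists N, open N /\ N x /\ N `<=` S) -> open S.
Proof.
move=> H; rewrite openE => x /H [N [oN [Nx NS]]]; rewrite /interior.
apply: (filterS NS); exact: open_nbhs_nbhs.
Qed.

Lemma nbhs_open (T : topologicalType) (x : T) (S : set T) :
  nbhs x S -> exists N, open N /\ N x /\ N `<=` S.
Proof. by rewrite nbhsE => -[B [oB Bx] BS]; exists B. Qed.

Lemma wcont_open (T U : topologicalType) (D : set T) (f : T -> U) :
  open D -> {within D, continuous f} -> forall X, open X -> open (D `&` f @^-1` X).
Proof. by move=> oD c; apply/continuous_inP => //; rewrite -continuous_open_subspace. Qed.

Lemma open_wcont (T U : topologicalType) (D : set T) (f : T -> U) :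
  open D -> (forall X, open X -> open (D `&` f @^-1` X)) -> {within D, continuous f}.
Proof. by move=> oD c; rewrite continuous_open_subspace //; apply/continuous_inP. Qed.

Lemma mul_local (G : topGroupoid) (X : set (Arr G)) (g x : Arr G) :
  open X -> src g = rng x -> X (Defs.mul g x) ->
  exists N1 N2, open N1 /\ open N2 /\ N1 g /\ N2 x /\
    forall g' x', N1 g' -> N2 x' -> src g' = rng x' -> X (Defs.mul g' x').
Proof.
move=> oX c Xgx.
have := @mul_cont G (g, x) X.
rewrite /= nbhs_simpl.
move=> /(_ (open_nbhs_nbhs (conj oX Xgx))).
move=> H.
have H2 : within [set p : Arr G * Arr G | src p.1 = rng p.2] (nbhs (g, x))
   ((fun p : Arr G * Arr G => Defs.mul p.1 p.2) @^-1` X).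
  rewrite (@nbhs_subspace_in _ [set p : Arr G * Arr G | src p.1 = rng p.2] (g, x) c).
  exact: H.
move: H2; rewrite /within /= => -[[Q R] [/= Qg Rx] QRsub].
have [N1 [o1 [N1g N1Q]]] := @nbhs_open (Arr G) _ _ Qg.
have [N2 [o2 [N2x N2R]]] := @nbhs_open (Arr G) _ _ Rx.
exists N1, N2; split => //; split => //; split => //; split => //.
move=> g' x' a b e; exact: (QRsub (g', x') (conj (N1Q _ a) (N2R _ b)) e).
Qed.

Lemma choice_fun (T : Type) (P : T -> T -> Prop) :
  exists f : T -> T, forall x, (exists g, P x g) -> P x (f x).
Proof.
exists (fun x => match pselect (exists g, P x g) with
                 | left e => projT1 (cid e) | right _ => x end).
move=> x; case: pselect => // e _; exact: projT2 (cid e).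
Qed.

Definition phiB (G : topGroupoid) (U : set (Arr G)) : set (Arr G * Arr G) :=
  [set p | exists g, U g /\ src g = rng p.1 /\ p.2 = Defs.mul g p.1].

Arguments phiB {G} U.
Arguments mul_local {G X g x}.
Section Main.
Variable G : topGroupoid.
Local Notation A := (Arr G).
Local Notation mul := (@Defs.mul G).
Local Notation inv := (@Defs.inv G).
Local Notation unt := (@Defs.unt G).
Local Notation src := (@Defs.src G).
Local Notation rng := (@Defs.rng G).

Lemma cancel_l (g x : A) : src g = rng x -> mul (inv g) (mul g x) = x.
Proof.
move=> c; rewrite mulA ?src_inv //; rewrite mul_inv_l c; exact: mul_unt_l.
Qed.

Lemma cancel_r (g x : A) : rng g = rng x -> mul g (mul (inv g) x) = x.
Proof.
move=> c; rewrite mulA ?rng_inv ?src_inv //; rewrite mul_inv_r c; exact: mul_unt_l.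
Qed.

Lemma open_pre (f : A -> A) (X : set A) : continuous f -> open X -> open (f @^-1` X).
Proof. by move=> /continuousP; apply. Qed.

Lemma open_pre_rng (X : set (Ob G)) : open X -> open (rng @^-1` X).
Proof. by move: (@rng_cont G) => /continuousP; apply. Qed.

Lemma open_pre_unt (X : set A) : open X -> open (unt @^-1` X).
Proof. by move: (@unt_cont G) => /continuousP; apply. Qed.

Lemma open_pre_inv (X : set A) : open X -> open (inv @^-1` X).
Proof. by move: (@inv_cont G) => /continuousP; apply. Qed.

Lemma etale_open_rng : etale G -> forall W : set A, open W -> open (rng @` W).
Proof.
move=> HG W oW; apply: open_pt => y [w Ww <-].
have [E [[oE [_ [_ [Eo _]]]] Ew]] := HG w.
exists (rng @` (W `&` E)); split; first by apply: Eo; [exact: openI | move=> z []].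
split; first by exists w.
by move=> z [v [Wv _] <-]; exists v.
Qed.

Lemma etale_open_src : etale G -> forall W : set A, open W -> open (src @` W).
Proof.
move=> HG W oW; apply: open_pt => y [w Ww <-].
have [E [[oE [_ [_ [_ Eo]]]] Ew]] := HG w.
exists (src @` (W `&` E)); split; first by apply: Eo; [exact: openI | move=> z []].
split; first by exists w.
by move=> z [v [Wv _] <-]; exists v.
Qed.

Lemma units_open : etale G -> open (range unt).
Proof.
move=> HG; apply: open_pt => y [u _ <-].
have [E [[oE [Er _]] Eu]] := HG (unt u).
exists (E `&` ((fun g => unt (rng g)) @^-1` E)); split.
  apply: openI => //; apply: open_pre => // z.
  apply: continuous_comp; [exact: rng_cont | exact: unt_cont].
split; first by split => //=; rewrite rng_unt.
move=> g [Eg Eug]; exists (rng g) => //.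
apply: Er; rewrite ?inE //; exact: rng_unt.
Qed.


Lemma part1 (U : set A) : is_bisection U -> is_equivariant_phomeo (phiB U).
Proof.
move=> [oU [Ur [Us [Uro Uso]]]].
have sinj a b : U a -> U b -> src a = src b -> a = b.
  by move=> Ua Ub; apply: Us; rewrite inE.
have rinj a b : U a -> U b -> rng a = rng b -> a = b.
  by move=> Ua Ub; apply: Ur; rewrite inE.
have [sg Hsg] := @choice_fun A (fun x g : A => U g /\ src g = rng x).
have [tu Htu] := @choice_fun A (fun y h : A => U h /\ rng h = rng y).
pose D := [set x : A | exists g, U g /\ src g = rng x].
pose V := [set y : A | exists h, U h /\ rng h = rng y].
exists D, V, (fun x => mul (sg x) x), (fun y => mul (inv (tu y)) y).
have sgE x g : U g -> src g = rng x -> sg x = g.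
  move=> Ug e; have [U1 e1] := Hsg x (ex_intro _ g (conj Ug e)).
  by apply: sinj => //; rewrite e1 e.
have tuE y h : U h -> rng h = rng y -> tu y = h.
  move=> Ug e; have [U1 e1] := Htu y (ex_intro _ h (conj Ug e)).
  by apply: rinj => //; rewrite e1 e.
split.
  have -> : D = rng @^-1` (src @` U).
    by apply/seteqP; split => x /=; [case=> g [Ug e]; exists g | case=> g Ug e; exists g].
  by apply: open_pre_rng; apply: Uso.
split.
  have -> : V = rng @^-1` (rng @` U).
    by apply/seteqP; split => x /=; [case=> g [Ug e]; exists g | case=> g Ug e; exists g].
  by apply: open_pre_rng; apply: Uro.
split.
  apply/seteqP; split => -[x y] /=.
    by case=> g [Ug [e E]]; rewrite /= in e E; rewrite /graph_of /= E; split; [exists g | rewrite (sgE x g)]. 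
  by rewrite /graph_of /= => -[[g [Ug e]] ->]; exists g; rewrite (sgE x g).
split.
  apply: open_wcont.
    have -> : D = rng @^-1` (src @` U).
      by apply/seteqP; split => x /=; [case=> g [Ug e]; exists g | case=> g Ug e; exists g].
    by apply: open_pre_rng; apply: Uso.
  move=> X oX; apply: open_pt => x [[g [Ug e]]] /=; rewrite (sgE x g) // => Xgx.
  have [N1 [N2 [o1 [o2 [N1g [N2x loc]]]]]] := mul_local oX e Xgx.
  exists (N2 `&` rng @^-1` (src @` (N1 `&` U))); split.
    apply: openI => //; apply: open_pre_rng; apply: Uso; [exact: openI | by move=> z []].
  split; first by split => //; exists g.
  move=> x' [N2x' [g' [N1g' Ug'] e']]; split; first by exists g'.
  by rewrite /= (sgE x' g') //; apply: loc.
split.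
  apply: open_wcont.
    have -> : V = rng @^-1` (rng @` U).
      by apply/seteqP; split => x /=; [case=> g [Ug e]; exists g | case=> g Ug e; exists g].
    by apply: open_pre_rng; apply: Uro.
  move=> X oX; apply: open_pt => y [[h [Uh e]]] /=; rewrite (tuE y h) // => Xhy.
  have e2 : src (inv h) = rng y by rewrite src_inv.
  have [N1 [N2 [o1 [o2 [N1g [N2x loc]]]]]] := mul_local oX e2 Xhy.
  exists (N2 `&` rng @^-1` (rng @` ((inv @^-1` N1) `&` U))); split.
    apply: openI => //; apply: open_pre_rng; apply: Uro;
      [apply: openI => //; exact: open_pre_inv | by move=> z []].
  split; first by split => //; exists h.
  move=> y' [N2y' [h' [N1h' Uh'] e']]; split; first by exists h'.
  by rewrite /= (tuE y' h') //; apply: loc => //; rewrite src_inv.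
split.
  move=> x [g [Ug e]]; rewrite (sgE x g) //.
  have e3 : rng (mul g x) = rng g by rewrite rng_mul.
  split; first by exists g.
  by rewrite (tuE _ g) // cancel_l.
split.
  move=> y [h [Uh e]]; rewrite (tuE y h) //.
  have e3 : rng (mul (inv h) y) = src h by rewrite rng_mul ?rng_inv ?src_inv.
  split; first by exists h.
  by rewrite (sgE _ h) // cancel_r.
move=> x g' [g [Ug e]] e'.
have e3 : rng (mul x g') = rng x by rewrite rng_mul.
split; first by exists g; rewrite e3.
rewrite (sgE x g) // (sgE _ g) ?e3 //.
split; first by rewrite src_mul.
by rewrite mulA.
Qed.


Lemma part3 (P : set (A * A)) : etale G -> is_equivariant_phomeo P ->
  exists B, is_bisection B /\ phiB B = P.
Proof.
move=> HG [D [V [t [t' [oD [oV [-> [ct [ct' [tt' [t't eqv]]]]]]]]]]].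
have sU u : D (unt u) -> src (t (unt u)) = u.
  move=> Du; have [_ [e _]] := eqv (unt u) (unt u) Du (etrans (src_unt u) (esym (rng_unt u))).
  by rewrite e rng_unt.
have Dunit x : D x -> D (unt (rng x)).
  move=> Dx; have [H _] := eqv x (inv x) Dx (esym (rng_inv x)).
  by rewrite mul_inv_r in H.
have tdec x : D x -> t x = mul (t (unt (rng x))) x.
  move=> Dx; have [_ [_ H]] := eqv (unt (rng x)) x (Dunit x Dx) (src_unt _).
  by rewrite mul_unt_l in H.
have tinj x y : D x -> D y -> t x = t y -> x = y.
  by move=> Dx Dy e; rewrite -(tt' x Dx).2 -(tt' y Dy).2 e.
pose B := [set b : A | exists u, D (unt u) /\ b = t (unt u)].
exists B; split; last first.
  apply/seteqP; split => -[x y] /=.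
    case=> b [[u [Du ->]] [e E]]; rewrite /= in e E; rewrite /graph_of /= E.
    rewrite sU // in e; rewrite e in Du.
    have [H1 [_ H2]] := eqv (unt (rng x)) x Du (src_unt _).
    by rewrite mul_unt_l in H1 H2; rewrite e H2.
  rewrite /graph_of /= => -[Dx ->]; exists (t (unt (rng x))); split.
    by exists (rng x); split => //; exact: Dunit.
  by split; [rewrite sU //; exact: Dunit | exact: tdec].
split.
  have -> : B = V `&` t' @^-1` (D `&` range unt).
    apply/seteqP; split => b /=.
      case=> u [Du ->]; have [Vt t'E] := tt' _ Du.
      by rewrite t'E; split => //; split => //; exists u.
    case=> Vb [Dt' [u _ E]]; exists u; split; first by rewrite E.
    by rewrite E (t't b Vb).2.
  apply: wcont_open => //; apply: openI => //; exact: units_open.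
split.
  move=> b c; rewrite !inE => -[y [Dy ->]] [z [Dz ->]] e.
  pose w := mul (inv (t (unt y))) (t (unt z)).
  have rw : rng w = y by rewrite /w rng_mul ?rng_inv ?sU // src_inv.
  have c1 : src (unt y) = rng w by rewrite src_unt rw.
  have [Dw [_ tw]] := eqv (unt y) w Dy c1.
  have uw : mul (unt y) w = w by rewrite -{1}rw mul_unt_l.
  rewrite uw in Dw tw.
  rewrite /w cancel_r // in tw.
  have wz := tinj _ _ Dw Dz tw.
  by rewrite -rw wz rng_unt.
split.
  by move=> b c; rewrite !inE => -[y [Dy ->]] [z [Dz ->]]; rewrite !sU // => ->.
split => W oW _; [exact: (etale_open_rng HG) | exact: (etale_open_src HG)].
Qed.

End Main.

Theorem lemma4p10 (G : topGroupoid) (HG : etale G) :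
  exists phi : set (Arr G) -> set (Arr G * Arr G),
    (forall U, is_bisection U -> is_equivariant_phomeo (phi U)) /\
    (forall U V, is_bisection U -> is_bisection V -> phi U = phi V -> U = V) /\
    (forall P, is_equivariant_phomeo P -> exists U, is_bisection U /\ phi U = P) /\
    (forall U V, is_bisection U -> is_bisection V ->
       phi (bis_mul U V) = ph_comp (phi U) (phi V)) /\
    (forall U, is_bisection U -> phi (bis_inv U) = ph_inv (phi U)).
Proof.
exists phiB; split; first exact: part1.
split.
  have sub (U V : set (Arr G)) : phiB U = phiB V -> U `<=` V.
    move=> E g Ug.
    have : phiB V (unt (src g), g).
      by rewrite -E; exists g; rewrite /= rng_unt mul_unt_r.
    case=> h [Vh [/= e E2]]; rewrite rng_unt in e.
    by rewrite E2 -e mul_unt_r.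
  move=> U V _ _ E; apply/seteqP; split; apply: sub => //.
split; first by move=> P; exact: part3.
split.
  move=> U V _ _; apply/seteqP; split => -[x z] /=.
    case=> k [[g [h [Ug [Vh [e ->]]]]] [/= e2 ->]].
    rewrite src_mul // in e2.
    exists (Defs.mul h x); split; first by exists h.
    exists g; split => //=; rewrite rng_mul //; split => //.
    by rewrite mulA.
  case=> y [[h [Vh [/= e1 ->]]] [g [Ug [/= e2 ->]]]].
  rewrite rng_mul // in e2.
  exists (Defs.mul g h); split; first by exists g, h.
  by rewrite /= src_mul // mulA.
move=> U _; apply/seteqP; split => -[x y] /=.
  case=> k [[g [Ug ->]] [/= e ->]]; rewrite src_inv in e.
  exists g; split => //=; rewrite rng_mul ?rng_inv ?src_inv //; split => //.
  by rewrite cancel_r.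
case=> g [Ug [/= e E]].
exists (Defs.inv g); split; first by exists g.
rewrite /= src_inv E rng_mul //; split => //.
by rewrite cancel_l.
Qed.
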